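(* Let $q$ be a prime power, $k\ge1$ and $n\ge 2k+1$. If $\mathcal{L}$ is a Cameron-Liebler $k$-set of $\mathrm{AG}(n,q)$ with parameter $x=1$, then $\mathcal{L}$ consists of all affine $k$-spaces through some fixed affine point.
   Context: $\mathrm{AG}(n,q)$ is $\mathrm{PG}(n,q)$ with a hyperplane $\pi_\infty$ removed; affine points are points outside $\pi_\infty$, affine $k$-spaces are $k$-dimensional projective subspaces not contained in $\pi_\infty$. With $A_n$ the incidence matrix of affine points versus affine $k$-spaces, a set $\mathcal{L}$ of affine $k$-spaces is a Cameron-Liebler $k$-set of $\mathrm{AG}(n,q)$ if its characteristic vector lies in the real row space $\mathrm{Im}(A_n^T)$; its parameter is $|\mathcal{L}|/\left[{n\atop k}\right]_q$ with $\left[{a\atop b}\right]_q=\frac{(q^a-1)\cdots(q^{a-b+1}-1)}{(q^b-1)\cdots(q-1)}$. *)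

(* Defs.v *)
From HB Require Import structures.
From mathcomp Require Import all_boot all_order all_algebra.
From mathcomp Require Import reals.
Set Implicit Arguments. Unset Strict Implicit. Unset Printing Implicit Defensive.
Import Order.TTheory GRing.Theory Num.Theory.
Local Open Scope ring_scope.

(* PG(n,q) is modelled on the vector space V = F^(n+1) ('rV[F]_(n.+1)),
   F a finite field with q = #|F| elements.  A projective d-space is a
   (d+1)-dimensional vector subspace, represented by its set of vectors. *)

Section AG.
Variables (F : finFieldType) (n : nat).
Local Notation V := 'rV[F]_(n.+1).

Definition vsubspace (d : nat) (S : {set V}) : bool :=
  [exists M : 'M[F]_(d, n.+1),
     (\rank M == d) && (S == [set v : V | (v <= M)%MS])].

Definition pi_inf : {set V} := [set v : V | v ord0 ord0 == 0].

Definition affine_space (k : nat) (S : {set V}) : bool :=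
  vsubspace k.+1 S && ~~ (S \subset pi_inf).

Definition affine_point (P : {set V}) : bool := affine_space 0 P.

(* L is a Cameron-Liebler k-set: L is a set of affine k-spaces whose
   characteristic vector lies in the real row space Im(A_n^T), where
   A_n is the incidence matrix affine points x affine k-spaces;
   i.e. chi_L = A_n^T y for some real vector y indexed by affine points. *)
Definition cameron_liebler (R : realType) (k : nat) (L : {set {set V}}) : Prop :=
  (forall K, K \in L -> affine_space k K) /\
  exists y : {set V} -> R,
    forall K, affine_space k K ->
      ((K \in L)%:R : R) = \sum_(P | affine_point P && (P \subset K)) y P.

End AG.

Definition qbinom (R : realType) (q a b : nat) : R :=
  \prod_(i < b) (((q ^ (a - i))%:R - 1) / ((q ^ i.+1)%:R - 1)).

Definition cl_parameter (R : realType) (F : finFieldType) (n k : nat)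
  (L : {set {set 'rV[F]_(n.+1)}}) : R :=
  (#|L|%:R) / qbinom R #|F| n k.

Arguments vsubspace {F n} d S.
Arguments pi_inf {F n}.
Arguments affine_space {F n} k S.
Arguments affine_point {F n} P.
Arguments cameron_liebler {F n} R k L.
Arguments cl_parameter R {F} n k L.

(* Main.v *)
Require Import Defs.
From HB Require Import structures.
From mathcomp Require Import all_boot all_order all_algebra.
From mathcomp Require Import reals.
From mathcomp Require Import zify.
Set Implicit Arguments. Unset Strict Implicit. Unset Printing Implicit Defensive.
Import Order.TTheory GRing.Theory Num.Theory.
Local Open Scope ring_scope.


Section MatrixPart.
Variables (F : finFieldType) (n : nat) (H : 'M[F]_(n.+1)).
Hypothesis rkH : \rank H = n.
Local Notation M := 'M[F]_(n.+1).

Lemma sub_of_rank m1 m2 (A : 'M[F]_(m1, n.+1)) (B : 'M[F]_(m2, n.+1)) :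
  (A <= B)%MS -> (\rank B <= \rank A)%N -> (B <= A)%MS.
Proof. by move=> sAB; rewrite (geq_leqif (mxrank_leqif_sup sAB)). Qed.

Lemma rank_lt_sub m1 m2 (A : 'M[F]_(m1, n.+1)) (B : 'M[F]_(m2, n.+1)) :
  (A <= B)%MS -> ~~ (B <= A)%MS -> (\rank A < \rank B)%N.
Proof. by move=> sAB; rewrite (ltn_leqif (mxrank_leqif_sup sAB)). Qed.

Lemma rk_capH m (X : 'M[F]_(m, n.+1)) : ~~ (X <= H)%MS ->
  (\rank (X :&: H)%MS).+1 = \rank X.
Proof.
move=> nXH; have h1 := mxrank_sum_cap X H.
have h2 := rank_leq_col (X + H)%MS.
have h3 : (\rank H < \rank (X + H))%N.
  by apply: rank_lt_sub; rewrite ?addsmxSr // addsmx_sub negb_and nXH.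
lia.
Qed.

Lemma rk_addv (X : M) (v : 'rV[F]_(n.+1)) : ~~ (v <= X)%MS ->
  \rank (X + v)%MS = (\rank X).+1.
Proof.
move=> nvX; have h1 := mxrank_adds_leqif X v.
have h2 := rank_leq_row v.
have h3 : (\rank X < \rank (X + v))%N.
  by apply: rank_lt_sub; rewrite ?addsmxSl // addsmx_sub negb_and nvX orbT.
move: h1 => /leqifP; case: ifP => _ h1; lia.
Qed.

Lemma ext_vec (X : M) : (X <= H)%MS -> (\rank X < n)%N ->
  exists v : 'rV[F]_(n.+1), (v <= H)%MS /\ ~~ (v <= X)%MS.
Proof.
move=> sXH lt; have : ~~ (H <= X)%MS.
  by apply/negP => /mxrankS; lia.
case/row_subPn => i hi; exists (row i H); split => //; exact: row_sub.
Qed.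

Lemma exists_sub_rank (W : M) r : (r <= \rank W)%N ->
  exists T : M, \rank T = r /\ (T <= W)%MS.
Proof.
move=> hr; exists (pid_mx r *m row_base W).
split; last by apply: submx_trans (submxMl _ _) _; rewrite eq_row_base.
rewrite mxrankMfree ?row_base_free // rank_pid_mx //.
by have := rank_leq_col W; lia.
Qed.

Section Conc.
Variables (t : nat) (T : M) (A : M -> M).
Hypothesis rkT : \rank T = t.
Hypothesis sTH : (T <= H)%MS.
Definition gW (W : M) := [&& \rank W == t.+1, (W <= H)%MS & (T <= W)%MS].
Hypothesis hA : forall W, gW W ->
  [/\ \rank (A W) = t.+2, (W <= A W)%MS & ~~ (A W <= H)%MS].
Hypothesis hC : forall W1 W2, gW W1 -> gW W2 -> ~~ (W1 == W2)%MS ->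
  ~~ ((A W1 :&: A W2)%MS <= H)%MS.

Lemma AcapH W : gW W -> ((A W :&: H)%MS <= W)%MS.
Proof.
move=> g; have [r sW nH] := hA g; move: (g) => /and3P[/eqP rW sWH _].
apply: sub_of_rank; first by rewrite sub_capmx sW sWH.
have := rk_capH nH; lia.
Qed.

Lemma rk_capW W1 W2 : gW W1 -> gW W2 -> ~~ (W1 == W2)%MS ->
  \rank (W1 :&: W2)%MS = t /\ \rank (W1 + W2)%MS = t.+2.
Proof.
move=> g1 g2 ne; move: g1 g2 => /and3P[/eqP r1 _ t1] /and3P[/eqP r2 _ t2].
have h1 : (t <= \rank (W1 :&: W2)%MS)%N.
  by rewrite -rkT; apply: mxrankS; rewrite sub_capmx t1 t2.
have h2 : (\rank (W1 :&: W2)%MS < \rank W1)%N.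
  apply: rank_lt_sub; first exact: capmxSl.
  apply/negP => s; move/negP: ne; apply.
  have s12 : (W1 <= W2)%MS by move: s; rewrite sub_capmx => /andP[].
  by rewrite -(geq_leqif (mxrank_leqif_eq s12)) r1 r2.
have := mxrank_sum_cap W1 W2; lia.
Qed.

Lemma capAA W1 W2 : gW W1 -> gW W2 -> ~~ (W1 == W2)%MS ->
  \rank (A W1 :&: A W2)%MS = t.+1 /\ (T <= (A W1 :&: A W2))%MS.
Proof.
move=> g1 g2 ne; have nH := hC g1 g2 ne.
have [_ sW1 _] := hA g1; have [_ sW2 _] := hA g2.
have [rc _] := rk_capW g1 g2 ne.
move: (g1) (g2) => /and3P[_ _ t1] /and3P[_ _ t2].
have sT : (T <= (A W1 :&: A W2))%MS.
  by rewrite sub_capmx !(submx_trans _ sW1, submx_trans _ sW2).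
split => //.
have hr := rk_capH nH.
have s1 : ((A W1 :&: A W2 :&: H)%MS <= (W1 :&: W2))%MS.
  rewrite sub_capmx; apply/andP; split.
    apply: submx_trans (AcapH g1); apply: capmxS => //; exact: capmxSl.
  apply: submx_trans (AcapH g2); apply: capmxS => //; exact: capmxSr.
have s2 : (T <= (A W1 :&: A W2 :&: H))%MS by rewrite sub_capmx sT sTH.
move: (mxrankS s1) (mxrankS s2) => m1 m2; clear -m1 m2 rc hr rkT; lia.
Qed.

Lemma case1 W1 W2 W : gW W1 -> gW W2 -> gW W -> ~~ (W1 == W2)%MS ->
  ~~ (W <= W1 + W2)%MS -> ((A W1 :&: A W2)%MS <= A W)%MS.
Proof.
move=> g1 g2 g ne nW; apply/negPn/negP => nG.
have ne1 : ~~ (W == W1)%MS.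
  apply/negP => /eqmxP e; move/negP: nW; apply.
  by rewrite e addsmxSl.
have ne2 : ~~ (W == W2)%MS.
  apply/negP => /eqmxP e; move/negP: nW; apply.
  by rewrite e addsmxSr.
have [r1 _] := capAA g g1 ne1; have [r2 _] := capAA g g2 ne2.
have [r12 _] := capAA g1 g2 ne.
have [rW sW nWH] := hA g; have [rW1 sW1 nW1H] := hA g1; have [rW2 sW2 _] := hA g2.
have n21 : ~~ ((A W :&: A W2)%MS <= (A W :&: A W1))%MS.
  apply/negP => s; move/negP: nG; apply.
  have s' : ((A W :&: A W1)%MS <= (A W :&: A W2))%MS.
    by apply: sub_of_rank => //; rewrite r1 r2.
  have s'' : ((A W :&: A W1)%MS <= (A W1 :&: A W2))%MS.
    rewrite sub_capmx capmxSr /=; apply: submx_trans s' _; exact: capmxSr.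
  have e : ((A W1 :&: A W2)%MS <= (A W :&: A W1))%MS.
    by apply: sub_of_rank => //; rewrite r1 r12.
  by apply: submx_trans e _; exact: capmxSl.
have hlt := rank_lt_sub (addsmxSl (A W :&: A W1)%MS (A W :&: A W2)%MS)
   (introT negP (fun h => (negP n21) (submx_trans (addsmxSr _ _) h))).
have sAW : (A W <= (A W1 + A W2))%MS.
  have s0 : (((A W :&: A W1) + (A W :&: A W2))%MS <= A W)%MS.
    by rewrite addsmx_sub !capmxSl.
  apply: submx_trans (sub_of_rank s0 _) _; first by clear -hlt r1 rW; lia.
  by apply: addsmxS; exact: capmxSr.
have rS := mxrank_sum_cap (A W1) (A W2).
have nSH : ~~ ((A W1 + A W2)%MS <= H)%MS.
  by rewrite addsmx_sub negb_and nW1H.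
have rSH := rk_capH nSH.
have [_ r12W] := rk_capW g1 g2 ne.
move: (g1) (g2) (g) => /and3P[_ h1 _] /and3P[_ h2 _] /and3P[_ h _].
have s12 : ((W1 + W2)%MS <= ((A W1 + A W2) :&: H))%MS.
  by rewrite sub_capmx (addsmxS sW1 sW2) /= addsmx_sub h1 h2.
have e : (((A W1 + A W2) :&: H)%MS <= (W1 + W2))%MS.
  by apply: sub_of_rank s12 _; clear -rSH rS r12 r12W rW1 rW2; lia.
move/negP: nW; apply; apply: submx_trans e.
by rewrite sub_capmx h (submx_trans sW sAW).
Qed.

Lemma trip X Y Z : gW X -> gW Y -> gW Z -> ~~ (X == Y)%MS ->
  ~~ (Z <= X + Y)%MS -> (((X + Y) :&: (X + Z))%MS <= X)%MS.
Proof.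
move=> gX gY gZ nXY nZ.
have nXZ : ~~ (X == Z)%MS.
  apply/negP => /eqmxP e; move/negP: nZ; apply; by rewrite -e addsmxSl.
have [_ r1] := rk_capW gX gY nXY; have [_ r2] := rk_capW gX gZ nXZ.
have hlt : (\rank (X + Y)%MS < \rank ((X + Y) + (X + Z))%MS)%N.
  apply: rank_lt_sub; first exact: addsmxSl.
  apply/negP => s; move/negP: nZ; apply.
  apply: submx_trans s; apply: submx_trans (addsmxSr _ _); exact: addsmxSr.
have := mxrank_sum_cap (X + Y)%MS (X + Z)%MS.
move: (gX) => /and3P[/eqP rX _ _] => h.
apply: sub_of_rank; first by rewrite sub_capmx !addsmxSl.
clear -h r1 r2 hlt rX; lia.
Qed.

Lemma conc : (t.+3 <= n)%N ->
  exists G : M, [/\ \rank G = t.+1, (T <= G)%MS, ~~ (G <= H)%MS &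
     forall W, gW W -> (G <= A W)%MS].
Proof.
move=> hn.
have mkW : forall X : M, (T <= X)%MS -> (X <= H)%MS -> (\rank X < n)%N ->
   exists W, gW W /\ ~~ (W <= X)%MS.
  move=> X tX xH lt; have [v [vH nv]] := ext_vec xH lt.
  have nvT : ~~ (v <= T)%MS.
    by apply/negP => s; move/negP: nv; apply; apply: submx_trans tX.
  exists (T + v)%MS; split.
    by rewrite /gW rk_addv // rkT eqxx addsmx_sub sTH vH addsmxSl.
  apply/negP => s; move/negP: nv; apply; apply: submx_trans s.
  exact: addsmxSr.
have [W1 [g1 _]] := mkW T (submx_refl T) sTH (ltac:(clear -hn rkT; lia)).
move: (g1) => /and3P[/eqP rW1 hW1 tW1].
have [W2 [g2 n21]] := mkW W1 tW1 hW1 (ltac:(clear -hn rW1; lia)).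
move: (g2) => /and3P[/eqP rW2 hW2 tW2].
have ne12 : ~~ (W1 == W2)%MS.
  by apply/negP => /eqmxP e; move/negP: n21; apply; rewrite e.
have ne21 : ~~ (W2 == W1)%MS.
  by apply/negP => /eqmxP e; move/negP: n21; apply; rewrite e.
have [rc12 rs12] := rk_capW g1 g2 ne12.
have [W3 [g3 n3]] := mkW (W1 + W2)%MS (submx_trans tW1 (addsmxSl _ _))
   (ltac:(by rewrite addsmx_sub hW1 hW2)) (ltac:(clear -hn rs12; lia)).
have [rG tG] := capAA g1 g2 ne12.
have nGH := hC g1 g2 ne12.
exists (A W1 :&: A W2)%MS; split => // W g.
case: (boolP (W <= W1 + W2)%MS) => hW; last exact: case1.
have ne13 : ~~ (W1 == W3)%MS.
  apply/negP => /eqmxP e; move/negP: n3; apply; rewrite -e; exact: addsmxSl.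
have ne23 : ~~ (W2 == W3)%MS.
  apply/negP => /eqmxP e; move/negP: n3; apply; rewrite -e; exact: addsmxSr.
have G3 := case1 g1 g2 g3 ne12 n3.
have sub13 : ((A W1 :&: A W2)%MS <= (A W1 :&: A W3))%MS.
  by rewrite sub_capmx capmxSl G3.
have sub23 : ((A W1 :&: A W2)%MS <= (A W2 :&: A W3))%MS.
  by rewrite sub_capmx capmxSr G3.
case: (boolP (W <= W1 + W3)%MS) => h13.
  case: (boolP (W <= W2 + W3)%MS) => h23; last first.
    by apply: submx_trans sub23 (case1 g2 g3 g ne23 h23).
  exfalso.
  have WX : (W <= W1)%MS.
    by apply: submx_trans (trip g1 g2 g3 ne12 n3); rewrite sub_capmx hW h13.
  have n3' : ~~ (W3 <= W2 + W1)%MS by rewrite addsmxC.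
  have WY : (W <= W2)%MS.
    apply: submx_trans (trip g2 g1 g3 ne21 n3').
    by rewrite sub_capmx h23 addsmxC hW.
  have : (W <= W1 :&: W2)%MS by rewrite sub_capmx WX WY.
  move/mxrankS; move: g => /and3P[/eqP rW _ _].
  clear -rW rc12; lia.
by apply: submx_trans sub13 (case1 g1 g3 g ne13 h13).
Qed.
End Conc.


Lemma BcapH (B T : M) : \rank B = (\rank T).+1 -> (T <= B)%MS -> (T <= H)%MS ->
  ~~ (B <= H)%MS -> ((B :&: H)%MS <= T)%MS.
Proof.
move=> rB sTB sTH nB; apply: sub_of_rank; first by rewrite sub_capmx sTB sTH.
have := rk_capH nB; clear -rB; lia.
Qed.

Lemma main k (A : M -> M) : (1 <= k)%N -> (k.+2 <= n)%N ->
  (forall W : M, \rank W = k -> (W <= H)%MS ->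
     [/\ \rank (A W) = k.+1, (W <= A W)%MS & ~~ (A W <= H)%MS]) ->
  (forall W1 W2 : M, \rank W1 = k -> \rank W2 = k -> (W1 <= H)%MS -> (W2 <= H)%MS ->
     \rank (W1 :&: W2)%MS = k.-1 -> ~~ ((A W1 :&: A W2)%MS <= H)%MS) ->
  exists p : 'rV[F]_(n.+1), ~~ (p <= H)%MS /\
     forall W : M, \rank W = k -> (W <= H)%MS -> (p <= A W)%MS.
Proof.
elim: k A => [//|k IH] A hk hn hA hC.
case: k IH hk hn hA hC => [|k] IH _ hn hA hC.
  have rk0 : \rank (0 : M) = 0%N by rewrite mxrank0.
  have s0 : ((0 : M) <= H)%MS by rewrite sub0mx.
  have hA' : forall W, gW 0 0 W ->
      [/\ \rank (A W) = 2, (W <= A W)%MS & ~~ (A W <= H)%MS].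
    by move=> W /and3P[/eqP r h _]; apply: hA.
  have hC' : forall W1 W2, gW 0 0 W1 -> gW 0 0 W2 -> ~~ (W1 == W2)%MS ->
      ~~ ((A W1 :&: A W2)%MS <= H)%MS.
    move=> W1 W2 g1 g2 ne; have [rc _] := rk_capW rk0 s0 g1 g2 ne.
    move: g1 g2 => /and3P[/eqP r1 h1 _] /and3P[/eqP r2 h2 _]; exact: hC.
  have [G [rG _ nG hG]] := conc rk0 s0 hA' hC' hn.
  case/row_subPn: nG => i hi; exists (row i G); split => // W rW hW.
  apply: submx_trans (row_sub i G) (hG W _).
  by rewrite /gW rW eqxx hW sub0mx.
pose goodG (T G : M) := [&& \rank G == k.+2, (T <= G)%MS, ~~ (G <= H)%MS &
   [forall W : M, [&& \rank W == k.+2, (W <= H)%MS & (T <= W)%MS] ==> (G <= A W)%MS]].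
pose B T := odflt 0 [pick G | goodG T G].
have hB : forall T : M, \rank T = k.+1 -> (T <= H)%MS -> goodG T (B T).
  move=> T rT sT.
  have hA' : forall W, gW k.+1 T W ->
      [/\ \rank (A W) = k.+3, (W <= A W)%MS & ~~ (A W <= H)%MS].
    by move=> W /and3P[/eqP r h _]; apply: hA.
  have hC' : forall W1 W2, gW k.+1 T W1 -> gW k.+1 T W2 -> ~~ (W1 == W2)%MS ->
      ~~ ((A W1 :&: A W2)%MS <= H)%MS.
    move=> W1 W2 g1 g2 ne; have [rc _] := rk_capW rT sT g1 g2 ne.
    move: g1 g2 => /and3P[/eqP r1 h1 _] /and3P[/eqP r2 h2 _]; exact: hC.
  have [G [rG tG nG hG]] := conc rT sT hA' hC' hn.
  rewrite /B; case: pickP => [G' //|/(_ G)].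
  rewrite /goodG rG eqxx tG nG /=; move/negbT/negP; case.
  by apply/forallP => W; apply/implyP => g; apply: hG.
have hAB : forall T : M, \rank T = k.+1 -> (T <= H)%MS ->
   [/\ \rank (B T) = k.+2, (T <= B T)%MS & ~~ (B T <= H)%MS].
  move=> T rT sT; have /and4P[/eqP r1 r2 r3 _] := hB T rT sT; by split.
have hCB : forall T1 T2 : M, \rank T1 = k.+1 -> \rank T2 = k.+1 -> (T1 <= H)%MS -> (T2 <= H)%MS ->
     \rank (T1 :&: T2)%MS = k -> ~~ ((B T1 :&: B T2)%MS <= H)%MS.
  move=> T1 T2 r1 r2 s1 s2 r12.
  have rS := mxrank_sum_cap T1 T2.
  have sW : ((T1 + T2)%MS <= H)%MS by rewrite addsmx_sub s1 s2.
  have rW : \rank (T1 + T2)%MS = k.+2 by clear -rS r1 r2 r12; lia.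
  have [rA _ _] := hA _ rW sW.
  have /and4P[/eqP rB1 tB1 nB1 /forallP/(_ (T1 + T2)%MS)/implyP h1] := hB T1 r1 s1.
  have /and4P[/eqP rB2 tB2 nB2 /forallP/(_ (T1 + T2)%MS)/implyP h2] := hB T2 r2 s2.
  have {}h1 := h1 (ltac:(by rewrite rW eqxx sW addsmxSl)).
  have {}h2 := h2 (ltac:(by rewrite rW eqxx sW addsmxSr)).
  have c1 : ((B T1 :&: H)%MS <= T1)%MS by apply: BcapH => //; rewrite rB1 r1.
  have c2 : ((B T2 :&: H)%MS <= T2)%MS by apply: BcapH => //; rewrite rB2 r2.
  have n21 : ~~ (B T2 <= B T1)%MS.
    apply/negP => s.
    have s' : (B T1 <= B T2)%MS by apply: sub_of_rank s _; rewrite rB1 rB2.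
    have : (T2 <= T1)%MS.
      apply: submx_trans c1; rewrite sub_capmx s2 andbT.
      exact: submx_trans tB2 s.
    move=> t21; have : (T2 <= T1 :&: T2)%MS by rewrite sub_capmx t21 submx_refl.
    move/mxrankS; clear -r12 r2; lia.
  have hlt : (\rank (B T1) < \rank (B T1 + B T2)%MS)%N.
    by apply: rank_lt_sub; rewrite ?addsmxSl // addsmx_sub negb_and n21 orbT.
  have hle : (\rank (B T1 + B T2)%MS <= \rank (A (T1 + T2)%MS))%N.
    by apply: mxrankS; rewrite addsmx_sub h1 h2.
  have rc := mxrank_sum_cap (B T1) (B T2).
  apply/negP => sc.
  have : ((B T1 :&: B T2)%MS <= (T1 :&: T2))%MS.
    rewrite sub_capmx; apply/andP; split.
      by apply: submx_trans c1; rewrite sub_capmx sc capmxSl.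
    by apply: submx_trans c2; rewrite sub_capmx sc capmxSr.
  move/mxrankS; clear -hlt hle rc rA rB1 rB2 r12; lia.
have [p [np hp]] := IH B (ltac:(by [])) (ltac:(clear -hn; lia)) hAB hCB.
exists p; split => // W rW hW.
  have [T [rT sTW]] := exists_sub_rank (ltac:(rewrite rW; exact: leqnSn) : (k.+1 <= \rank W)%N).
  have sTH := submx_trans sTW hW.
  have /and4P[_ _ _ /forallP/(_ W)/implyP hBW] := hB T rT sTH.
  apply: submx_trans (hp T rT sTH) (hBW _).
  by rewrite rW eqxx hW sTW.
Qed.

End MatrixPart.


Section Count.
Variables (F : finFieldType) (N : nat).
Local Notation q := #|F|.

Lemma card_subsp m (A : 'M[F]_(m, N)) :
  #|[set v : 'rV[F]_N | (v <= A)%MS]| = (q ^ \rank A)%N.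
Proof.
have -> : [set v : 'rV[F]_N | (v <= A)%MS] =
    [set u *m row_base A | u in [set: 'rV[F]_(\rank A)]].
  apply/setP => v; rewrite inE; apply/idP/imsetP.
    rewrite -(eq_row_base A) => /submxP[D ->]; by exists D; rewrite ?inE.
  by case=> u _ ->; rewrite -(eq_row_base A) submxMl.
rewrite card_imset; last exact: row_free_inj (row_base_free A).
by rewrite cardsT card_mx mul1n.
Qed.

Lemma rk_addv' m (Y : 'M[F]_(m, N)) (v : 'rV[F]_N) :
  \rank (Y + v)%MS = if (v <= Y)%MS then \rank Y else (\rank Y).+1.
Proof.
case: ifP => hv.
  apply/eqmx_rank/andP; split; last exact: addsmxSl.
  by rewrite addsmx_sub submx_refl hv.
have h1 := mxrank_sum_cap Y v; have h2 := rank_leq_row v.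
have h3 : (\rank Y < \rank (Y + v))%N.
  rewrite (ltn_leqif (mxrank_leqif_sup (addsmxSl Y v))).
  by rewrite addsmx_sub hv andbF.
have h4 : (\rank (Y :&: v)%MS < \rank v)%N.
  rewrite (ltn_leqif (mxrank_leqif_sup (capmxSr Y v))).
  by rewrite sub_capmx hv.
clear -h1 h2 h3 h4; lia.
Qed.

Lemma rk3 r0 d (X : 'M[F]_(r0, N)) (u : 'rV[F]_N) (D : 'M[F]_(d, N)) :
  \rank (X + col_mx u D)%MS = \rank ((X + D) + u)%MS.
Proof.
by rewrite (adds_eqmx (eqmx_refl X) (eqmx_sym (addsmxE u D))) [(u + D)%MS]addsmxC addsmxA.
Qed.

Lemma card_diff m1 m2 (S : 'M[F]_(m1, N)) (Y : 'M[F]_(m2, N)) : (Y <= S)%MS ->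
  #|[set u : 'rV[F]_N | (u <= S)%MS && ~~ (u <= Y)%MS]| = (q ^ \rank S - q ^ \rank Y)%N.
Proof.
move=> sYS.
have -> : [set u : 'rV[F]_N | (u <= S)%MS && ~~ (u <= Y)%MS] =
   [set u : 'rV[F]_N | (u <= S)%MS] :\: [set u : 'rV[F]_N | (u <= Y)%MS].
  by apply/setP => u; rewrite !inE andbC.
rewrite cardsD !card_subsp.
have -> : [set u : 'rV[F]_N | (u <= S)%MS] :&: [set u : 'rV[F]_N | (u <= Y)%MS]
   = [set u : 'rV[F]_N | (u <= Y)%MS].
  apply/setIidPr/subsetP => u; rewrite !inE => h; exact: submx_trans h sYS.
by rewrite card_subsp.
Qed.

Lemma card_indep r0 (X : 'M[F]_(r0, N)) (S : 'M[F]_N) : (X <= S)%MS -> forall d,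
  #|[set M : 'M[F]_(d, N) | (M <= S)%MS && (\rank (X + M)%MS == \rank X + d)%N]|
  = (\prod_(i < d) (q ^ \rank S - q ^ (\rank X + i)))%N.
Proof.
move=> sXS; elim=> [|d IH].
  rewrite big_ord0 -[RHS](card_mx F 0 N); apply: eq_card => M.
  by rewrite !inE [M]flatmx0 sub0mx /= addsmx0 addn0 eqxx.
rewrite big_ord_recr /= -IH.
set Sd := [set M : 'M_(d, N) | _].
rewrite -[LHS]sum1_card (partition_big (fun M : 'M_(d.+1, N) => @dsubmx _ 1 d _ M) (mem Sd)) /=;
  last first.
  move=> M; rewrite !inE => /andP[sMS /eqP rM].
  have eM := @vsubmxK _ 1 d N M.
  set u := @usubmx _ 1 d _ M in eM *; set D := @dsubmx _ 1 d _ M in eM *.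
  have sc : (@col_mx _ 1 d N u D <= S)%MS by rewrite eM.
  have rc : \rank (X + @col_mx _ 1 d N u D)%MS = (\rank X + d.+1)%N by rewrite eM.
  move: sc rc; rewrite col_mx_sub rk3 => /andP[_ ->] {}rM /=.
  have h1 := mxrank_sum_cap X D.
  have h2 := rank_leq_row D.
  have h3 := rk_addv' (X + D)%MS u.
  by apply/eqP; move: h3; case: ifP => _ h3; clear -h1 h2 h3 rM; lia.
rewrite -sum_nat_const; apply: eq_bigr => D; rewrite inE => /andP[sDS /eqP rD].
rewrite (reindex (fun u : 'rV[F]_N => (col_mx u D : 'M_(d.+1, N)))) /=; last first.
  exists (fun M : 'M_(d.+1, N) => @usubmx _ 1 d _ M) => [v _ | M]; first by rewrite col_mxKu.
  by case/andP=> _ /eqP <-; rewrite vsubmxK.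
have sXD : ((X + D)%MS <= S)%MS by rewrite addsmx_sub sXS sDS.
have cs : forall v : 'rV_N, ((col_mx v D : 'M_(d.+1, N)) <= S)%MS = (v <= S)%MS && (D <= S)%MS.
  by move=> v; exact: (col_mx_sub v D S).
have r3 : forall v : 'rV_N, \rank (X + (col_mx v D : 'M_(d.+1, N)))%MS = \rank ((X + D) + v)%MS.
  by move=> v; exact: (rk3 X v D).
rewrite sum1_card -rD -(card_diff sXD); apply: eq_card => u.
rewrite unfold_in /= !inE col_mxKd eqxx andbT cs sDS andbT r3.
rewrite rk_addv'; case: (u <= S)%MS => //=; case: ifP => _ /=.
  by apply/eqP; lia.
by rewrite rD addnS eqxx.
Qed.
End Count.


Section SetPart.
Variables (F : finFieldType) (n : nat).
Local Notation V := 'rV[F]_(n.+1).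
Local Notation q := #|F|.

Definition setof m (A : 'M[F]_(m, n.+1)) : {set V} := [set v : V | (v <= A)%MS].

Lemma sub_setof m1 m2 (A : 'M[F]_(m1, n.+1)) (B : 'M[F]_(m2, n.+1)) :
  (setof A \subset setof B) = (A <= B)%MS.
Proof.
apply/subsetP/idP => [h|h v].
  by apply/row_subP => i; have := h (row i A); rewrite !inE row_sub; apply.
by rewrite !inE => hv; exact: submx_trans hv h.
Qed.

Lemma setof_eq m1 m2 (A : 'M[F]_(m1, n.+1)) (B : 'M[F]_(m2, n.+1)) :
  (A <= B)%MS -> (B <= A)%MS -> setof A = setof B.
Proof. by move=> h1 h2; apply/eqP; rewrite eqEsubset !sub_setof h1 h2. Qed.

Definition cvec : 'cV[F]_(n.+1) := \col_(i < n.+1) ((i == ord0)%:R : F).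
Definition Hm : 'M[F]_(n.+1) := kermx cvec.

Lemma sub_Hm (v : V) : (v <= Hm)%MS = (v ord0 ord0 == 0).
Proof.
rewrite sub_kermx.
have e : (v *m cvec) ord0 ord0 = v ord0 ord0.
  rewrite !mxE (bigD1 ord0) //= big1 => [|j nj]; first by rewrite !mxE eqxx mulr1 addr0.
  by rewrite !mxE (negbTE nj) mulr0.
apply/eqP/eqP => [h|h]; first by rewrite -e h mxE.
by apply/matrixP => i j; rewrite !ord1 e h mxE.
Qed.

Lemma rkHm : \rank Hm = n.
Proof.
rewrite /Hm mxrank_ker.
have -> : \rank cvec = 1%N.
  apply/eqP; rewrite eqn_leq rank_leq_col lt0n mxrank_eq0.
  apply/negP => /eqP/matrixP/(_ ord0 ord0); rewrite !mxE eqxx => /eqP.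
  by rewrite oner_eq0.
by rewrite subn1.
Qed.

Lemma pi_infE : pi_inf = setof Hm.
Proof. by apply/setP => v; rewrite !inE sub_Hm. Qed.

Lemma vsubE d S : vsubspace d S -> exists A : 'M[F]_(n.+1), \rank A = d /\ S = setof A.
Proof.
case/existsP => M /andP[/eqP rM /eqP ->]; exists (<<M>>%MS); split.
  by rewrite mxrank_gen.
by apply/setP => v; rewrite !inE genmxE.
Qed.

Lemma vsubI m (A : 'M[F]_(m, n.+1)) d : \rank A = d -> vsubspace d (setof A).
Proof.
move=> <-; apply/existsP; exists (row_base A).
rewrite eq_row_base eqxx /=; apply/eqP/setP => v; by rewrite !inE eq_row_base.
Qed.

Lemma affE k K : affine_space k K ->
  exists A : 'M[F]_(n.+1), [/\ \rank A = k.+1, ~~ (A <= Hm)%MS & K = setof A].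
Proof.
case/andP => /vsubE[A [rA ->]]; rewrite pi_infE sub_setof => nA.
by exists A.
Qed.

Lemma affI k m (A : 'M[F]_(m, n.+1)) : \rank A = k.+1 -> ~~ (A <= Hm)%MS ->
  affine_space k (setof A).
Proof. by move=> rA nA; rewrite /affine_space vsubI // pi_infE sub_setof nA. Qed.

Lemma rank_pt (p : V) : ~~ (p <= Hm)%MS -> \rank p = 1%N.
Proof.
move=> np; apply/eqP; rewrite eqn_leq rank_leq_row lt0n mxrank_eq0.
by apply/negP => /eqP e; move: np; rewrite e sub0mx.
Qed.

Lemma ptE P : affine_point P -> exists p : V, ~~ (p <= Hm)%MS /\ P = setof p.
Proof.
case/affE => A [rA nA ->]; case/row_subPn: (nA) => i hi.
exists (row i A); split => //; apply: setof_eq; last exact: row_sub.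
by apply: (sub_of_rank (row_sub i A)); rewrite rA rank_pt.
Qed.

Lemma ptI (p : V) : ~~ (p <= Hm)%MS -> affine_point (setof p).
Proof. by move=> np; apply: affI => //; rewrite rank_pt. Qed.

Lemma cls_card k (W U : 'M[F]_(n.+1)) (P : {set V}) :
  \rank W = k -> (W <= Hm)%MS -> (W <= U)%MS -> affine_point P ->
  #|[set K | (affine_space k K && (setof W \subset K) && (K \subset setof U)) && (P \subset K)]|
   = (P \subset setof U).
Proof.
move=> rW sWH sWU /ptE[p [np ->]].
have npW : ~~ (p <= W)%MS by apply/negP => h; move/negP: np; apply; exact: submx_trans sWH.
have rWp : \rank (W + p)%MS = k.+1 by rewrite rk_addv' (negbTE npW) rW.
have e : forall K, ((affine_space k K && (setof W \subset K) && (K \subset setof U)) && (setof p \subset K))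
    = (K == setof (W + p)%MS) && (p <= U)%MS.
  move=> K; apply/idP/idP.
    case/andP => /andP[/andP[aK sWK] sKU] sPK.
    have [B [rB nB eK]] := affE aK; subst K.
    rewrite !sub_setof in sWK sKU sPK.
    have sB : ((W + p)%MS <= B)%MS by rewrite addsmx_sub sWK sPK.
    rewrite (setof_eq sB (sub_of_rank sB _)) ?rB ?rWp // eqxx /=.
    exact: submx_trans sPK sKU.
  case/andP => /eqP -> pU.
  rewrite affI //; last by rewrite addsmx_sub negb_and np orbT.
  by rewrite !sub_setof addsmxSl addsmxSr addsmx_sub sWU pU.
rewrite sub_setof; case: (boolP (p <= U)%MS) => hp.
  apply/eqP/cards1P; exists (setof (W + p)%MS); apply/setP => K.
  by rewrite !inE e hp andbT.
apply/eqP; rewrite cards_eq0; apply/eqP/setP => K.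
by rewrite !inE e (negbTE hp) andbF.
Qed.


Lemma star_card k (P : {set V}) : affine_point P ->
  (#|[set K | affine_space k K && (P \subset K)]| *
     \prod_(i < k) (q ^ k.+1 - q ^ (1 + i)) =
   \prod_(i < k) (q ^ n.+1 - q ^ (1 + i)))%N.
Proof.
case/ptE => p [np ->]; have rp := rank_pt np.
have := card_indep (submx1 p) k; rewrite mxrank1 rp => <-.
set star := [set K | _].
rewrite -[RHS]sum1_card (partition_big (fun M : 'M[F]_(k, n.+1) => setof (p + M)%MS) (mem star)) /=;
  last first.
  move=> M; rewrite !inE => /andP[_ /eqP rM].
  rewrite affI //; last by rewrite addsmx_sub negb_and np.
  by rewrite sub_setof addsmxSl.
rewrite -sum_nat_const; apply: eq_bigr => K; rewrite inE => /andP[/affE[B [rB nB eK]] sPK].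
subst K; rewrite sub_setof in sPK.
have := card_indep sPK k; rewrite rB rp => <-.
rewrite sum1_card; apply: eq_card => M; rewrite !inE unfold_in /= !inE submx1 /=.
apply/idP/idP; last first.
  case/andP => /eqP rM /eqP e; rewrite rM eqxx andbT.
  have : (setof (p + M)%MS \subset setof B) by rewrite e.
  by rewrite sub_setof addsmx_sub => /andP[].
case/andP => sMB /eqP rM; rewrite rM eqxx /=.
have sB : ((p + M)%MS <= B)%MS by rewrite addsmx_sub sPK sMB.
by rewrite (setof_eq sB (sub_of_rank sB _)) // rB rM add1n.
Qed.
End SetPart.


Lemma qbinom_mul (R : realType) (q n k : nat) : (1 < q)%N -> (k <= n)%N ->
  qbinom R q n k * ((\prod_(i < k) (q ^ k.+1 - q ^ (1 + i)))%N)%:R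
  = ((\prod_(i < k) (q ^ n.+1 - q ^ (1 + i)))%N)%:R.
Proof.
move=> hq hk.
have term : forall a i, (i < a)%N ->
    ((q ^ a.+1 - q ^ (1 + i))%:R : R) = (q ^ (1 + i))%:R * ((q ^ (a - i))%:R - 1).
  move=> a i lt.
  have e : (q ^ a.+1 = q ^ (1 + i) * q ^ (a - i))%N.
    by rewrite -expnD; congr (expn q _); lia.
  rewrite e natrB; last by apply: leq_pmulr; rewrite expn_gt0 ltnW.
  by rewrite natrM mulrBr mulr1.
rewrite /qbinom !natr_prod.
rewrite (eq_bigr _ (fun (i : 'I_k) _ => term k i (ltn_ord i))).
rewrite (eq_bigr _ (fun (i : 'I_k) _ => term n i (leq_trans (ltn_ord i) hk))).
rewrite !big_split /= prodfV.
have revE : \prod_(i < k) ((q ^ (k - i))%:R - 1 : R) = \prod_(i < k) ((q ^ i.+1)%:R - 1).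
  rewrite (reindex_inj rev_ord_inj) /=; apply: eq_bigr => i _.
  by rewrite subKn.
rewrite revE.
have nz : \prod_(i < k) ((q ^ i.+1)%:R - 1 : R) != 0.
  apply/prodf_neq0 => i _; rewrite subr_eq0 pnatr_eq1.
  have : (1 < q ^ i.+1)%N.
    by rewrite expnS; apply: (leq_trans hq); apply: leq_pmulr; rewrite expn_gt0 ltnW.
  by case: (q ^ i.+1)%N => [|[|]].
by rewrite [X in _ * X]mulrC mulrA divfK // mulrC.
Qed.

Theorem theorem6p5 (R : realType) (F : finFieldType) (n k : nat)
  (hk : (1 <= k)%N) (hn : (2 * k + 1 <= n)%N)
  (L : {set {set 'rV[F]_(n.+1)}}) :
  cameron_liebler R k L ->
  cl_parameter R n k L = 1 ->
  exists P : {set 'rV[F]_(n.+1)}, affine_point P /\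
    L = [set K : {set 'rV[F]_(n.+1)} | affine_space k K && (P \subset K)].
Proof.
move=> [hL [y hy]] hpar.
pose V := 'rV[F]_(n.+1).
pose H := Hm F n.
have rkH : \rank H = n := rkHm F n.
have hq : (1 < #|F|)%N := card_finNzRing_gt1 F.
have swap : forall c : pred {set V}, (forall K, c K -> affine_space k K) ->
   \sum_(K | c K) ((K \in L)%:R : R)
   = \sum_(P | affine_point P) y P * (#|[set K | c K && (P \subset K)]|)%:R.
  move=> c hc.
  transitivity (\sum_(K | c K) \sum_(P | affine_point P && (P \subset K)) y P).
    by apply: eq_bigr => K /hc /hy.
  rewrite (exchange_big_dep (fun P => affine_point P)) /=; last by move=> K P _ /andP[].
  apply: eq_bigr => P hP.
  rewrite (eq_bigl (fun K => K \in [set K | c K && (P \subset K)])) => [|K]; last first.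
    by rewrite inE hP.
  by rewrite sumr_const mulr_natr.
have cardL : forall c : pred {set V},
    \sum_(K | c K) ((K \in L)%:R : R) = (#|[set K | c K && (K \in L)]|)%:R.
  move=> c; rewrite -sum1_card natr_sum big_mkcond [RHS]big_mkcond /=.
  by apply: eq_bigr => K _; rewrite inE; case: (c K); case: (K \in L).
have hQ : qbinom R #|F| n k != 0.
  apply/negP => /eqP h; move: hpar; rewrite /cl_parameter h invr0 mulr0 => /eqP.
  by rewrite eq_sym oner_eq0.
have hLc : (#|L|%:R : R) = qbinom R #|F| n k.
  by move: hpar; rewrite /cl_parameter => /(congr1 (fun x => x * qbinom R #|F| n k));
     rewrite divfK // mul1r.
have hkn : (k <= n)%N by clear -hn; lia.
have f0pos : (0 < \prod_(i < k) (#|F| ^ k.+1 - #|F| ^ (1 + i)))%N.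
  apply: prodn_gt0 => i; rewrite subn_gt0 ltn_exp2l //.
  by rewrite add1n ltnS ltn_ord.
have starQ : forall P : {set V}, affine_point P ->
    (#|[set K | affine_space k K && (P \subset K)]|%:R : R) = qbinom R #|F| n k.
  move=> P hP; have e := star_card k hP.
  have nz : ((\prod_(i < k) (#|F| ^ k.+1 - #|F| ^ (1 + i)))%N%:R : R) != 0.
    by rewrite pnatr_eq0 -lt0n.
  apply: (mulIf nz); rewrite qbinom_mul // -natrM e //.
have sumy : \sum_(P | affine_point P) y P = 1.
  have e1 := swap (fun K => affine_space k K) (fun K h => h).
  rewrite cardL in e1.
  have eL : [set K | affine_space k K && (K \in L)] = L.
    apply/setP => K; rewrite inE; case hK: (K \in L); last by rewrite andbF.
    by rewrite hL.
  rewrite eL hLc in e1.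
  rewrite (eq_bigr (fun P => y P * qbinom R #|F| n k)) -?mulr_suml in e1; last first.
    by move=> P hP; rewrite starQ.
  apply: (mulIf hQ); by rewrite mul1r -e1.
pose cls (W U : 'M[F]_(n.+1)) := fun K : {set V} =>
  affine_space k K && (setof W \subset K) && (K \subset setof U).
have clsum : forall W U : 'M[F]_(n.+1), \rank W = k -> (W <= H)%MS -> (W <= U)%MS ->
    (#|[set K | cls W U K && (K \in L)]|%:R : R)
    = \sum_(P | affine_point P) y P * (P \subset setof U)%:R.
  move=> W U rW sW sU; rewrite -cardL swap; last by move=> K /andP[/andP[]].
  by apply: eq_bigr => P hP; rewrite /cls cls_card.
have clsone : forall W : 'M[F]_(n.+1), \rank W = k -> (W <= H)%MS ->
    #|[set K | cls W 1%:M K && (K \in L)]| = 1%N.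
  move=> W rW sW; apply/eqP; rewrite -(eqr_nat R) clsum ?submx1 //.
  rewrite -[X in _ == X]sumy; apply/eqP; apply: eq_bigr => P _.
  have -> : P \subset setof (1%:M : 'M[F]_(n.+1)) by apply/subsetP => v _; rewrite inE submx1.
  by rewrite mulr1.
pose goodA (W X : 'M[F]_(n.+1)) :=
  [&& setof X \in L, \rank X == k.+1, (W <= X)%MS & ~~ (X <= H)%MS].
pose A W := odflt 0 [pick X | goodA W X].
have hA : forall W, \rank W = k -> (W <= H)%MS -> goodA W (A W).
  move=> W rW sW; have /eqP/cards1P[K0 e0] := clsone W rW sW.
  have : K0 \in [set K | cls W 1%:M K && (K \in L)] by rewrite e0 set11.
  rewrite inE => /andP[/andP[/andP[aK sWK] _] K0L].
  have [B [rB nB eK]] := affE aK; subst K0.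
  rewrite /A; case: pickP => [X //|/(_ B)].
  by rewrite /goodA K0L rB eqxx -sub_setof sWK nB.
have uniq : forall W K, \rank W = k -> (W <= H)%MS -> K \in L -> affine_space k K ->
    setof W \subset K -> K = setof (A W).
  move=> W K rW sW KL aK sWK.
  have /eqP/cards1P[K0 e0] := clsone W rW sW.
  have /and4P[AL /eqP rA sWA nA] := hA W rW sW.
  have h1 : K \in [set K | cls W 1%:M K && (K \in L)].
    rewrite inE KL andbT /cls aK sWK /=; apply/subsetP => v _; by rewrite inE submx1.
  have h2 : setof (A W) \in [set K | cls W 1%:M K && (K \in L)].
    by rewrite inE AL /cls affI // !sub_setof sWA submx1.
  by rewrite e0 in h1 h2; rewrite (set1P h1) (set1P h2).
have hA' : forall W : 'M[F]_(n.+1), \rank W = k -> (W <= H)%MS ->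
    [/\ \rank (A W) = k.+1, (W <= A W)%MS & ~~ (A W <= H)%MS].
  by move=> W rW sW; have /and4P[_ /eqP r s t] := hA W rW sW.
have hC' : forall W1 W2 : 'M[F]_(n.+1), \rank W1 = k -> \rank W2 = k ->
    (W1 <= H)%MS -> (W2 <= H)%MS -> \rank (W1 :&: W2)%MS = k.-1 ->
    ~~ ((A W1 :&: A W2)%MS <= H)%MS.
  move=> W1 W2 r1 r2 s1 s2 r12.
  have /and4P[A1L /eqP rA1 sW1 nA1] := hA W1 r1 s1.
  have /and4P[A2L /eqP rA2 sW2 nA2] := hA W2 r2 s2.
  pose U := (A W1 + W2)%MS.
  have sW1U : (W1 <= U)%MS by apply: submx_trans sW1 (addsmxSl _ _).
  have sW2U : (W2 <= U)%MS by exact: addsmxSr.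
  have ec : #|[set K | cls W1 U K && (K \in L)]| = #|[set K | cls W2 U K && (K \in L)]|.
    by apply/eqP; rewrite -(eqr_nat R) clsum // clsum.
  have : setof (A W1) \in [set K | cls W1 U K && (K \in L)].
    by rewrite inE A1L andbT /cls affI // !sub_setof sW1 addsmxSl.
  move=> hin.
  have : (0 < #|[set K | cls W2 U K && (K \in L)]|)%N.
    by rewrite -ec; apply/card_gt0P; exists (setof (A W1)).
  case/card_gt0P => K; rewrite inE => /andP[/andP[/andP[aK sWK] sKU] KL].
  have eK := uniq W2 K r2 s2 KL aK sWK.
  rewrite eK sub_setof in sKU.
  have c1 : ((A W1 :&: H)%MS <= W1)%MS by apply: (BcapH rkH) => //; rewrite rA1 r1.
  have c2 : ((A W2 :&: H)%MS <= W2)%MS by apply: (BcapH rkH) => //; rewrite rA2 r2.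
  have h1 := mxrank_sum_cap (A W1) W2.
  have h2 := mxrankS (capmxS sW1 (submx_refl W2)).
  have h3 : (\rank (A W1 + A W2)%MS <= \rank U)%N.
    by apply: mxrankS; rewrite addsmx_sub addsmxSl sKU.
  have h4 := mxrank_sum_cap (A W1) (A W2).
  apply/negP => sc.
  have : ((A W1 :&: A W2)%MS <= (W1 :&: W2))%MS.
    rewrite sub_capmx; apply/andP; split.
      by apply: submx_trans c1; rewrite sub_capmx sc capmxSl.
    by apply: submx_trans c2; rewrite sub_capmx sc capmxSr.
  move/mxrankS => h5.
  rewrite /U in h3; clear -h1 h2 h3 h4 h5 r1 r2 r12 rA1 rA2 hk; lia.
have hn' : (k.+2 <= n)%N by clear -hn hk; lia.
have [p [np hp]] := main rkH hk hn' hA' hC'.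
exists (setof p); split; first exact: ptI.
apply/setP => K; rewrite inE.
case hK: (K \in L).
  have aK := hL K hK; have [B [rB nB eK]] := affE aK.
  have rW : \rank (B :&: H)%MS = k by move: (rk_capH rkH nB); rewrite rB => -[].
  have sW : ((B :&: H)%MS <= H)%MS by exact: capmxSr.
  have sWK : setof (B :&: H)%MS \subset K by rewrite eK sub_setof capmxSl.
  have eA := uniq _ K rW sW hK aK sWK.
  by rewrite aK /= eA sub_setof hp.
apply/esym/negbTE/negP => /andP[aK sPK].
have [B [rB nB eK]] := affE aK.
have rW : \rank (B :&: H)%MS = k by move: (rk_capH rkH nB); rewrite rB => -[].
have sW : ((B :&: H)%MS <= H)%MS by exact: capmxSr.
have /and4P[AL /eqP rA sWA nA] := hA _ rW sW.
have pB : (p <= B)%MS by rewrite eK sub_setof in sPK.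
have npW : ~~ (p <= (B :&: H))%MS.
  by apply/negP => h; move/negP: np; apply; apply: submx_trans h sW.
have rWp : \rank ((B :&: H) + p)%MS = k.+1 by rewrite rk_addv' (negbTE npW) rW.
have s1 : (((B :&: H) + p)%MS <= A (B :&: H)%MS)%MS by rewrite addsmx_sub sWA hp.
have s2 : (((B :&: H) + p)%MS <= B)%MS by rewrite addsmx_sub capmxSl pB.
have t1 := sub_of_rank s1 (ltac:(by rewrite rA rWp)).
have t2 := sub_of_rank s2 (ltac:(by rewrite rB rWp)).
have e : K = setof (A (B :&: H)%MS).
  by rewrite eK; apply: setof_eq; [apply: submx_trans t2 s1 | apply: submx_trans t1 s2].
by move: hK; rewrite e AL.
Qed.
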